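(* Let $n,k\ge 0$ be integers. The number of partitions $\lambda$ with $\lambda_1\le k$ and $i_{2n}(\lambda)<\infty$ equals $2^k\binom{n+k}{k}$. Equivalently, the total homology $\bigoplus_i \mathrm{H}_i(\mathfrak{H}_V(E);\mathbf{C})$, for $\dim V=2n$ and $\dim E=k$, decomposes as a direct sum of exactly $2^k\binom{n+k}{k}$ irreducible $\mathbf{GL}(E)\times\mathbf{Sp}(V)$-modules, pairwise non-isomorphic.
   Context: Partitions, $\lambda_1$ (the largest part), $\ell(\lambda)$, $|\lambda|$, $\lambda^\dagger$ as usual. Modification rule (defines $i_{2n}(\lambda)\in\mathbf{Z}_{\ge0}\cup\{\infty\}$ and $\tau_{2n}(\lambda)$), recursively: if $\ell(\lambda)\le n$, put $i_{2n}(\lambda)=0$, $\tau_{2n}(\lambda)=\lambda$. If $\ell(\lambda)>n$, let $R_\lambda$ be the border strip (connected skew diagram with no $2\times 2$ square) of $2(\ell(\lambda)-n-1)$ boxes along the rim of $\lambda$ starting at the first box of the last row of $\lambda$, if it exists. If $R_\lambda$ exists, is nonempty, and $\lambda\setminus R_\lambda$ is a partition, then $i_{2n}(\lambda)=c(R_\lambda)+i_{2n}(\lambda\setminus R_\lambda)$ and $\tau_{2n}(\lambda)=\tau_{2n}(\lambda\setminus R_\lambda)$ with $c(R_\lambda)$ the number of columns of $R_\lambda$; otherwise $i_{2n}(\lambda)=\infty$. The Lie algebra $\mathfrak{H}_V(E)=(E\otimes V)\oplus\mathrm{Sym}^2(E)$ for symplectic $(V,\omega_V)$ has bracket $[(e\otimes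 v,x),(e'\otimes v',x')]=(0,\omega_V(v,v')ee')$. *)

(* Defs.v *)
From mathcomp Require Import all_boot.
Set Implicit Arguments.
Unset Strict Implicit.
Unset Printing Implicit Defensive.

(* Rows/columns of the Young
   diagram are indexed from 0: box (i,j) is in row i, column j. *)
Definition is_partition (la : seq nat) : bool :=
  sorted geq la && all (fun x => 0 < x) la.

Definition part1 (la : seq nat) : nat := head 0 la.

Definition plength (la : seq nat) : nat := size la.

Definition in_diagram (la : seq nat) (b : nat * nat) : bool :=
  (b.1 < size la) && (b.2 < nth 0 la b.1).

(* Boxes of row i lying on the rim (boxes (i,j) with (i+1,j+1) not in la),
   listed from left to right.  In the last row every box is a rim box. *)
Definition rim_row (la : seq nat) (i : nat) : seq (nat * nat) :=
  if i == (size la).-1 then [seq (i, j) | j <- iota 0 (nth 0 la i)]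
  else [seq (i, j) | j <- iota (nth 0 la i.+1).-1
                                 (nth 0 la i - (nth 0 la i.+1).-1)].

(* The rim of la traversed as a connected path starting at the first box of
   the last row, moving right along the last row, then up and right. *)
Definition rim_path (la : seq nat) : seq (nat * nat) :=
  flatten [seq rim_row la i | i <- rev (iota 0 (size la))].

Definition border_strip (la : seq nat) (m : nat) : option (seq (nat * nat)) :=
  if m <= size (rim_path la) then Some (take m (rim_path la)) else None.

Definition remaining_rows (la : seq nat) (R : seq (nat * nat)) : seq nat :=
  [seq count (fun j => (i, j) \notin R) (iota 0 (nth 0 la i))
  | i <- iota 0 (size la)].

Definition skew_is_partition (la : seq nat) (R : seq (nat * nat)) : bool :=
  let mu := remaining_rows la R in
  sorted geq mu &&
  all (fun i => all (fun j => (in_diagram la (i, j) && ((i, j) \notin R))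
                              == (j < nth 0 mu i))
                    (iota 0 (part1 la)))
      (iota 0 (size la)).

Definition skew_partition (la : seq nat) (R : seq (nat * nat)) : seq nat :=
  filter (fun x => 0 < x) (remaining_rows la R).

Definition ncols (R : seq (nat * nat)) : nat := size (undup (map snd R)).

(* The modification rule; None encodes infinity.  [fuel] bounds the number of
   recursive steps (each step removes >= 1 box, so |la|+1 suffices). *)
Fixpoint i2n_aux (fuel n : nat) (la : seq nat) : option nat :=
  if size la <= n then Some 0 else
  match fuel with
  | 0 => None
  | f.+1 =>
    match border_strip la (2 * (size la - n - 1)) with
    | Some R =>
      if (R != [::]) && skew_is_partition la R
      then omap (addn (ncols R)) (i2n_aux f n (skew_partition la R))
      else None
    | None => None
    end
  end.

Definition i2n (n : nat) (la : seq nat) : option nat :=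
  i2n_aux (sumn la).+1 n la.

(* Main.v *)
From Stdlib Require Import ZArith Lia.
Require Import Defs.
From mathcomp Require Import all_boot zify.
Set Implicit Arguments. Unset Strict Implicit. Unset Printing Implicit Defensive.

Lemma geq_trans : transitive geq.
Proof. move=> x y z h1 h2 /=; exact: leq_trans h2 h1. Qed.
Lemma geq_refl : reflexive geq.
Proof. move=> x /=; exact: leqnn. Qed.

Section Part.
Variable la : seq nat.
Hypothesis Hp : is_partition la.

Lemma a_out i : size la <= i -> nth 0 la i = 0.
Proof. by move=> h; rewrite nth_default. Qed.

Lemma a_pos i : i < size la -> 0 < nth 0 la i.
Proof.
move: Hp => /andP[_ /allP H] hi; apply: H; exact: mem_nth.
Qed.

Lemma a_mono i j : i <= j -> nth 0 la j <= nth 0 la i.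
Proof.
move=> hij; case: (ltnP j (size la)) => hj.
  move: Hp => /andP[Hs _].
  have := sorted_leq_nth geq_trans geq_refl 0 Hs; move=> /(_ i j) /=.
  apply=> //; rewrite inE //; exact: leq_ltn_trans hij hj.
by rewrite a_out.
Qed.

Definition st i := (nth 0 la i.+1).-1.

Lemma st_le i : st i <= nth 0 la i.
Proof. have := a_mono (leqnSn i); rewrite /st; lia. Qed.

Lemma rim_row_eq i : i < size la ->
  rim_row la i = [seq (i, j) | j <- iota (st i) (nth 0 la i - st i)].
Proof.
move=> hi; rewrite /rim_row /st; case: eqP => [e|ne] //.
have -> : i.+1 = size la by lia.
by rewrite (a_out (leqnn _)) /= subn0.
Qed.

Definition Q r := size (flatten [seq rim_row la i | i <- rev (iota r (size la - r))]).

Lemma Q_out r : size la <= r -> Q r = 0.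
Proof. by move=> h; rewrite /Q (_ : size la - r = 0) //; lia. Qed.

Lemma Q_S r : r < size la -> Q r = (nth 0 la r - st r) + Q r.+1.
Proof.
move=> hr; rewrite /Q -(subnSK hr) /= rev_cons map_rcons flatten_rcons size_cat.
by rewrite rim_row_eq // size_map size_iota addnC.
Qed.

Lemma Q_closed r : r < size la -> Q r = nth 0 la r + (size la).-1 - r.
Proof.
move=> hr; move Ht: (size la - r) => t.
elim: t r hr Ht => [|t IH] r hr Ht; first lia.
rewrite Q_S //.
case: (ltnP r.+1 (size la)) => h.
  rewrite IH //; last lia.
  have := a_pos h; have := a_mono (leqnSn r); rewrite /st; lia.
rewrite Q_out // /st (a_out h); lia.
Qed.

Lemma Q_mono i j : i <= j -> Q j <= Q i.
Proof.
move=> hij; move Ht: (j - i) => t; elim: t i hij Ht => [|t IH] i hij Ht.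
  by have -> : j = i by lia.
case: (ltnP i (size la)) => h.
  rewrite (Q_S h); have := IH i.+1; lia.
rewrite !Q_out //; lia.
Qed.

Lemma size_path : size (rim_path la) = Q 0.
Proof. by rewrite /Q subn0. Qed.

Lemma path_dec i : i < size la ->
  rim_path la = flatten [seq rim_row la i' | i' <- rev (iota i.+1 (size la - i.+1))]
     ++ rim_row la i ++ flatten [seq rim_row la i' | i' <- rev (iota 0 i)].
Proof.
move=> hi; rewrite /rim_path.
have -> : iota 0 (size la) = iota 0 i ++ i :: iota i.+1 (size la - i.+1).
  by rewrite -{1}(subnKC (ltnW hi)) iotaD add0n -(subnSK hi).
by rewrite rev_cat rev_cons map_cat map_rcons flatten_cat flatten_rcons -catA.
Qed.

Lemma fst_flatten x s : x \in flatten [seq rim_row la i | i <- s] -> x.1 \in s.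
Proof.
move=> /flattenP [s' /mapP [i hi ->]] hx.
suff -> : x.1 = i by [].
move: hx; rewrite /rim_row; case: ifP => _ /mapP [j _ ->] //.
Qed.

Lemma memR m i j : i < size la ->
  ((i, j) \in take m (rim_path la)) =
  (st i <= j) && (j < st i + minn (m - Q i.+1) (nth 0 la i - st i)).
Proof.
move=> hi; rewrite (path_dec hi) take_cat.
have nin1 : (i, j) \notin flatten [seq rim_row la i' | i' <- rev (iota i.+1 (size la - i.+1))].
  apply/negP => /fst_flatten; rewrite mem_rev mem_iota /=; lia.
have nin3 : (i, j) \notin flatten [seq rim_row la i' | i' <- rev (iota 0 i)].
  apply/negP => /fst_flatten; rewrite mem_rev mem_iota /=; lia.
rewrite -/(Q i.+1).
case: ifP => hm.
  have -> : m - Q i.+1 = 0 by lia.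
  rewrite [X in X = _](_ : _ = false) ?min0n ?addn0; last by apply/negP => /mem_take; apply/negP: nin1.
  by case: leqP => //= h; rewrite ltnNge h.
rewrite mem_cat (negbTE nin1) /= take_cat.
rewrite rim_row_eq // size_map size_iota.
case: ifP => hm2.
  rewrite -map_take take_iota mem_map; last by move=> x y [].
  by rewrite mem_iota.
rewrite mem_cat [X in _ || X](_ : _ = false) ?orbF; last by apply/negP => /mem_take; apply/negP: nin3.
rewrite mem_map; last by move=> x y [].
rewrite mem_iota (_ : minn (m - Q i.+1) (nth 0 la i - st i) = nth 0 la i - st i) //; lia.
Qed.


Lemma count_rng s e A : s + e <= A ->
  count (fun j => (s <= j) && (j < s + e)) (iota 0 A) = e.
Proof.
move=> h.
have -> : iota 0 A = iota 0 s ++ iota s e ++ iota (s + e) (A - (s + e)).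
  by rewrite -iotaD -iotaD; congr iota; lia.
rewrite !count_cat.
rewrite (eq_in_count (a2 := pred0)); last by move=> x; rewrite mem_iota /=; lia.
rewrite (eq_in_count (s := iota s e) (a2 := predT)); last by move=> x; rewrite mem_iota /=; lia.
rewrite (eq_in_count (s := iota (s + e) _) (a2 := pred0)); last by move=> x; rewrite mem_iota /=; lia.
by rewrite !count_pred0 count_predT size_iota addn0.
Qed.

Lemma count_out s e A : s + e <= A ->
  count (fun j => ~~ ((s <= j) && (j < s + e))) (iota 0 A) = A - e.
Proof.
move=> h; have := count_predC (fun j => (s <= j) && (j < s + e)) (iota 0 A).
rewrite count_rng // size_iota => H; rewrite -[in RHS]H addKn //.
Qed.

Lemma mu_size m : size (remaining_rows la (take m (rim_path la))) = size la.
Proof. by rewrite /remaining_rows size_map size_iota. Qed.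

Lemma mu_nth m i : i < size la ->
  nth 0 (remaining_rows la (take m (rim_path la))) i =
  nth 0 la i - minn (m - Q i.+1) (nth 0 la i - st i).
Proof.
move=> hi; rewrite /remaining_rows (nth_map 0) ?size_iota // nth_iota // add0n.
rewrite (eq_in_count (a2 := fun j => ~~ ((st i <= j) && (j < st i + minn (m - Q i.+1) (nth 0 la i - st i))))).
  rewrite count_out //; have := st_le i; lia.
by move=> j _; rewrite memR.
Qed.

Lemma find_r m : 0 < m -> m <= Q 0 -> exists2 r, r < size la & Q r.+1 < m <= Q r.
Proof.
move=> m0 mQ.
suff H : forall t r, size la - r = t -> m <= Q r -> exists2 r', r' < size la & Q r'.+1 < m <= Q r'.
  exact: (H _ 0 erefl mQ).
elim=> [|t IH] r Ht hr.
  by rewrite Q_out in hr; lia.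
case: (ltnP (Q r.+1) m) => h.
  exists r; [lia | lia].
apply: (IH r.+1) => //; lia.
Qed.

Lemma mu_aligned r i : r < size la ->
  nth 0 (remaining_rows la (take (Q r) (rim_path la))) i =
  if i < r then nth 0 la i else (nth 0 la i.+1).-1.
Proof.
move=> hr; case: (ltnP i (size la)) => hi.
  rewrite mu_nth //.
  have := Q_S hi; have := st_le i; rewrite /st.
  case: ltngtP => hir.
  - have := Q_mono hir; lia.
  - have := Q_mono hir; have := Q_S hr; lia.
  - subst i; lia.
rewrite nth_default ?mu_size // ltnNge (leq_trans (ltnW hr) hi) /= a_out //; lia.
Qed.

Lemma sorted_nth (s : seq nat) :
  (forall i, i.+1 < size s -> nth 0 s i.+1 <= nth 0 s i) -> sorted geq s.
Proof.
elim: s => [|x s IH] //= H.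
case: s IH H => [|y s] //= IH H.
apply/andP; split; first exact: (H 0).
apply: IH => i hi; exact: (H i.+1).
Qed.

Lemma skew_ok r : r < size la -> skew_is_partition la (take (Q r) (rim_path la)).
Proof.
move=> hr; rewrite /skew_is_partition; apply/andP; split.
  apply: sorted_nth => i; rewrite mu_size => hi; rewrite !mu_aligned //.
  have h1 := a_mono (leqnSn i); have h2 := a_mono (leqnSn i.+1).
  have h3 : nth 0 la i.+1 <= nth 0 la i by [].
  case: (ltnP i.+1 r) => h; first by rewrite (ltnW h).
  case: (ltnP i r) => h'; lia.
apply/allP => i; rewrite mem_iota => /andP [_ hi]; apply/allP => j _.
rewrite /in_diagram /= hi /= memR // mu_aligned //.
have := Q_S hi; have := st_le i; rewrite /st.
case: (ltnP i r) => hir.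
  have := Q_mono hir; lia.
case: (ltngtP i r) => hir2; first lia.
  have := Q_mono hir2; have := Q_S hr; lia.
subst i; lia.
Qed.

Lemma skew_fail m r : r < size la -> Q r.+1 < m < Q r ->
  ~~ skew_is_partition la (take m (rim_path la)).
Proof.
move=> hr hm; apply/negP; rewrite /skew_is_partition => /andP [_ /allP H].
have := H r; rewrite mem_iota hr => /(_ isT) /allP /(_ (nth 0 la r).-1).
have ar := a_pos hr; have a0 := a_mono (leq0n r).
rewrite mem_iota /part1 -nth0 (_ : 0 <= _ < 0 + _) //; last lia.
move=> /(_ isT); rewrite /in_diagram /= hr /= memR // mu_nth //.
have := Q_S hr; have := st_le r; rewrite /st; lia.
Qed.

End Part.

Definition inX n la (v : Z) :=
  exists i, (Z.of_nat (nth 0%N la i) + Z.of_nat n - Z.of_nat i)%Z = v.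
Definition Crit n la :=
  inX n la 0 /\ forall d, 0 < d -> inX n la (Z.of_nat d) \/ inX n la (- Z.of_nat d).

Lemma nth_filter_pos (s : seq nat) i : sorted geq s ->
  nth 0 [seq x <- s | 0 < x] i = nth 0 s i.
Proof.
elim: s i => [|x s IH] i //= Hs.
have Hs' : sorted geq s by move: Hs; case: s {IH} => //= y s /andP [].
case: x Hs => [|x] Hs /=.
  have Hall : all (geq 0) s := order_path_min geq_trans Hs.
  have -> : [seq x <- s | 0 < x] = [::].
    rewrite (eq_in_filter (a2 := pred0)) ?filter_pred0 //.
    by move=> y hy; move/allP: Hall => /(_ y hy) /=; lia.
  case: i => [|i] //=; case: (ltnP i (size s)) => hi; last by rewrite nth_default.
  by move/allP: Hall => /(_ _ (mem_nth 0 hi)) /=; case: (nth 0 s i).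
by case: i => [|i] //=; rewrite IH.
Qed.

Lemma sumn_filter_pos (s : seq nat) : sumn [seq x <- s | 0 < x] = sumn s.
Proof. by elim: s => [|[|x] s IH] //=; rewrite IH. Qed.

Lemma sumn_le (f g : nat -> nat) s :
  (forall i, i \in s -> f i <= g i) -> sumn (map f s) <= sumn (map g s).
Proof.
elim: s => [|x s IH] H //=.
have := H x (mem_head _ _); have := IH (fun z hz => H z (etrans (in_cons _ _ _) (introT orP (or_intror hz)))); lia.
Qed.

Lemma sumn_lt (f g : nat -> nat) s :
  (forall i, i \in s -> f i <= g i) -> (exists2 i, i \in s & f i < g i) ->
  sumn (map f s) < sumn (map g s).
Proof.
elim: s => [|x s IH] H [i hi hfi] //=.
have Hs : forall z, z \in s -> f z <= g z := fun z hz => H z (etrans (in_cons _ _ _) (introT orP (or_intror hz))).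
rewrite inE in hi; case/orP: hi => [/eqP e|hi].
  have := sumn_le Hs; subst; lia.
have := IH Hs (ex_intro2 _ _ i hi hfi).
have := H x (mem_head _ _); lia.
Qed.

Section Step.
Variable n : nat.
Variable la : seq nat.
Hypothesis Hp : is_partition la.

Lemma xinj i j :
  (Z.of_nat (nth 0%N la i) + Z.of_nat n - Z.of_nat i =
   Z.of_nat (nth 0%N la j) + Z.of_nat n - Z.of_nat j)%Z -> i = j.
Proof.
move=> e; case: (ltngtP i j) => h //.
  have := a_mono Hp (ltnW h); lia.
have := a_mono Hp (ltnW h); lia.
Qed.

Lemma inX_low (v : Z) : (v <= Z.of_nat n - Z.of_nat (size la))%Z -> inX n la v.
Proof.
move=> hv; exists (Z.to_nat (Z.of_nat n - v)).
rewrite a_out //; lia.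
Qed.

Lemma gap : ~ inX n la (Z.of_nat n - Z.of_nat (size la) + 1).
Proof.
move=> [i]; case: (ltnP i (size la)) => hi.
  have := a_pos Hp hi; lia.
rewrite a_out //; lia.
Qed.

Lemma inX_up v : inX n la v -> (v <= Z.of_nat (nth 0%N la 0) + Z.of_nat n)%Z.
Proof. move=> [i <-]; have := a_mono Hp (leq0n i); lia. Qed.

Lemma crit_base : size la <= n -> Crit n la.
Proof.
move=> h; split; first by apply: inX_low; lia.
move=> d hd; right; apply: inX_low; lia.
Qed.

Definition mu r := skew_partition la (take (Q la r) (rim_path la)).

Lemma mu_sorted r : r < size la ->
  sorted geq (remaining_rows la (take (Q la r) (rim_path la))).
Proof. by move=> hr; case/andP: (skew_ok Hp hr). Qed.

Lemma mu_nth2 r i : r < size la ->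
  nth 0 (mu r) i = if i < r then nth 0 la i else (nth 0%N la i.+1).-1.
Proof. by move=> hr; rewrite /mu /skew_partition nth_filter_pos ?mu_aligned ?mu_sorted. Qed.

Lemma mu_part r : r < size la -> is_partition (mu r).
Proof.
move=> hr; apply/andP; split; first exact: sorted_filter geq_trans _ _ (mu_sorted hr).
exact: filter_all.
Qed.

Lemma mu_sumn r : r < size la -> sumn (mu r) < sumn la.
Proof.
move=> hr; rewrite /mu /skew_partition sumn_filter_pos.
set M := remaining_rows _ _.
have e1 : la = mkseq (nth 0 la) (size la) by rewrite mkseq_nth.
rewrite [X in _ < sumn X]e1 -(mkseq_nth 0 M) /mkseq mu_size.
apply: sumn_lt.
  move=> i _; rewrite /M mu_aligned //; case: ifP => // _.
  have := a_mono Hp (leqnSn i); lia.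
exists r; first by rewrite mem_iota.
by rewrite /M mu_aligned // ltnn; have := a_mono Hp (leqnSn r); have := a_pos Hp hr; lia.
Qed.

Lemma mu_X r v : r < size la ->
  (Z.of_nat (nth 0%N la r) + Z.of_nat n - Z.of_nat r = Z.of_nat (size la) - Z.of_nat n - 1)%Z ->
  inX n (mu r) v <->
  (inX n la v /\ v <> (Z.of_nat (size la) - Z.of_nat n - 1)%Z) \/
  v = (Z.of_nat n - Z.of_nat (size la) + 1)%Z.
Proof.
move=> hr hxr; split.
  move=> [i]; rewrite mu_nth2 //; case: ifP => hir.
    move=> <-; left; split; first by exists i.
    move=> e; rewrite -hxr in e; have := xinj e; lia.
  case: (ltnP i.+1 (size la)) => hi.
    have := a_pos Hp hi => hpos <-; left; split.
      by exists i.+1; lia.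
    move=> e; rewrite -hxr in e.
    have : i.+1 = r by apply: xinj; lia.
    lia.
  rewrite a_out //= => <-.
  case: (ltnP i (size la)) => hi2.
    by right; lia.
  left; split; first by exists i; rewrite a_out //; lia.
  have := a_pos Hp hr; lia.
move=> [[[i <-] hne] | ->].
  case: (ltngtP i r) => hir.
  - by exists i; rewrite mu_nth2 // hir.
  - case: (ltnP i (size la)) => hi.
      exists i.-1; rewrite mu_nth2 // ltnNge (_ : r <= i.-1) /=; last lia.
      rewrite prednK; last lia.
      have := a_pos Hp hi; lia.
    exists i; rewrite mu_nth2 // ltnNge (_ : r <= i) /=; last lia.
    rewrite !a_out //; lia.
  - by subst i; exfalso; apply: hne; rewrite -hxr.
exists (size la).-1; rewrite mu_nth2 // ltnNge (_ : r <= (size la).-1) /=; last lia.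
rewrite prednK; last lia.
rewrite a_out //=; lia.
Qed.

Lemma crit_mu r : r < size la -> n.+2 <= size la ->
  (Z.of_nat (nth 0%N la r) + Z.of_nat n - Z.of_nat r = Z.of_nat (size la) - Z.of_nat n - 1)%Z ->
  Crit n (mu r) <-> Crit n la.
Proof.
move=> hr hl hxr.
have hD : inX n la (Z.of_nat (size la) - Z.of_nat n - 1) by exists r.
have MX := fun v => mu_X v hr hxr.
split.
  move=> [h0 hd]; split.
    by case/MX: h0 => [[]|] //; lia.
  move=> d' hd'; case: (hd d' hd') => /MX [[h1 h2]|h1].
  - by left.
  - lia.
  - by right.
  - left; rewrite (_ : Z.of_nat d' = Z.of_nat (size la) - Z.of_nat n - 1)%Z //; lia.
move=> [h0 hd]; split.
  by apply/MX; left; split => //; lia.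
move=> d' hd'.
case: (Z.eq_dec (Z.of_nat d') (Z.of_nat (size la) - Z.of_nat n - 1)) => e.
  by right; apply/MX; right; lia.
case: (hd d' hd') => h.
  by left; apply/MX; left.
by right; apply/MX; left; split => //; lia.
Qed.

End Step.

Lemma omap_none (T U : Type) (g : T -> U) o : omap g o <> None <-> o <> None.
Proof. by case: o. Qed.

Lemma i2n_crit n : forall f la, is_partition la -> sumn la < f ->
  (i2n_aux f n la <> None <-> Crit n la).
Proof.
elim=> [|f IH] la Hp Hs; first lia.
rewrite /=.
case: leqP => hl.
  by split => // _; exact: crit_base.
case: (ltnP (size la) n.+2) => hl2.
  rewrite (_ : 2 * _ = 0); last lia.
  rewrite /border_strip leq0n take0 /=.
  split => [h|[h0 _]]; first by exfalso; apply: h.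
  have G := @gap n la Hp.
  rewrite (_ : (Z.of_nat n - Z.of_nat (size la) + 1 = 0)%Z) in G; [by case: (G h0) | lia].
have key : inX n la (Z.of_nat (size la) - Z.of_nat n - 1) <->
    exists2 r, r < size la & Q la r = 2 * (size la - n - 1).
  split.
    move=> [i hi]; case: (ltnP i (size la)) => hil.
      exists i => //; rewrite Q_closed //; lia.
    by move: hi; rewrite a_out //; lia.
  move=> [r hr hQ]; exists r; move: hQ; rewrite Q_closed //; lia.
have critd : Crit n la -> inX n la (Z.of_nat (size la) - Z.of_nat n - 1).
  move=> [_ hd]; case: (hd (size la - n - 1)); first lia.
    by rewrite (_ : Z.of_nat (size la - n - 1) = Z.of_nat (size la) - Z.of_nat n - 1)%Z //; lia.
  move=> h; have G := @gap n la Hp.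
  rewrite (_ : (Z.of_nat n - Z.of_nat (size la) + 1 = - Z.of_nat (size la - n - 1))%Z) in G; [by case: (G h) | lia].
case: (boolP (has (fun r => Q la r == 2 * (size la - n - 1)) (iota 0 (size la)))) => [/hasP [r hr /eqP hQ] | hn].
  rewrite mem_iota add0n /= in hr.
  have hxr : (Z.of_nat (nth 0%N la r) + Z.of_nat n - Z.of_nat r = Z.of_nat (size la) - Z.of_nat n - 1)%Z.
    by move: hQ; rewrite Q_closed //; lia.
  rewrite /border_strip -hQ size_path // Q_mono // skew_ok //.
  have -> : (take (Q la r) (rim_path la) != [::]) = true.
    rewrite -size_eq0 size_takel ?size_path ?Q_mono //.
    rewrite Q_closed //; have := a_pos Hp hr; lia.
  rewrite /= omap_none -/(mu la r) IH ?mu_part ?crit_mu //.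
  have := mu_sumn Hp hr; lia.
have nQ : forall r, r < size la -> Q la r != 2 * (size la - n - 1).
  move=> r hr; apply/negP => e; move/hasP: hn; apply; exists r => //; by rewrite mem_iota.
split; last first.
  move/critd/key => [r hr hQ]; by move: (nQ r hr); rewrite hQ eqxx.
rewrite /border_strip; case: ifP => hm //.
rewrite size_path // in hm.
have m0 : 0 < 2 * (size la - n - 1) by lia.
have [r hr /andP [h1 h2]] := find_r Hp m0 hm.
have h3 : 2 * (size la - n - 1) < Q la r by move: (nQ r hr); lia.
have h4 : Q la r.+1 < 2 * (size la - n - 1) < Q la r by rewrite h1 h3.
by rewrite (negbTE (skew_fail Hp hr h4)) andbF.
Qed.


Definition wrap (a b : bool) (w : seq bool) := a :: rcons w b.

Fixpoint Gw (P q : nat) : seq (seq bool) :=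
  match P with
  | 0 => if q is 0 then [:: [:: true]] else [::]
  | P'.+1 => [seq wrap true true w | w <- Gw P' q] ++
      (if q is q'.+1 then [seq wrap true false w | w <- Gw P' q'] ++
                          [seq wrap false true w | w <- Gw P' q'] else [::])
  end.

Lemma Gw_size P q : size (Gw P q) = 2 ^ q * 'C(P, q).
Proof.
elim: P q => [|P IH] [|q] //=.
  by rewrite bin0n muln0.
  by rewrite cats0 size_map IH !bin0.
rewrite !size_cat !size_map !IH binS expnS; lia.
Qed.

Lemma wrap_inj a b : injective (wrap a b).
Proof. by move=> x y [] /rcons_inj []. Qed.

Lemma mem_wrap a b s x : x \in [seq wrap a b w | w <- s] ->
  (head false x = a) /\ (last false x = b).
Proof. by move=> /mapP [w _ ->]; rewrite /wrap /= last_rcons. Qed.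

Lemma Gw_uniq P q : uniq (Gw P q).
Proof.
elim: P q => [|P IH] [|q] //=.
  by rewrite cats0 (map_inj_uniq (@wrap_inj _ _)) IH.
rewrite !cat_uniq !(map_inj_uniq (@wrap_inj _ _)) !IH /= andbT.
apply/andP; split.
  apply/hasP => [[x]]; rewrite mem_cat => /orP [] /mem_wrap [h1 h2] /mem_wrap [h3 h4].
    by rewrite h2 in h4.
  by rewrite h1 in h3.
by apply/hasP => [[x /mem_wrap [h1 h2] /mem_wrap [h3 h4]]]; rewrite h1 in h3.
Qed.

Lemma nth_wrap a b w i : nth false (wrap a b w) i =
  if i == 0 then a else if i == (size w).+1 then b else nth false w i.-1.
Proof.
case: i => [|i] //=; rewrite nth_rcons eqSS.
case: (ltngtP i (size w)) => h.
- by [].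
- by rewrite nth_default //; lia.
- by [].
Qed.

Definition validw P q (w : seq bool) :=
  [/\ size w = (2 * P).+1, count negb w = q, nth false w P &
      forall d, 0 < d <= P -> nth false w (P - d) || nth false w (P + d)].

Lemma valid_wrap P q a b w : size w = (2 * P).+1 ->
  validw P.+1 q (wrap a b w) <->
  [/\ a || b, count negb w + ~~ a + ~~ b = q, nth false w P &
      forall d, 0 < d <= P -> nth false w (P - d) || nth false w (P + d)].
Proof.
move=> hs; rewrite /validw.
have sz : size (wrap a b w) = (2 * P.+1).+1 by rewrite /wrap /= size_rcons hs; lia.
have cnt : count negb (wrap a b w) = count negb w + ~~ a + ~~ b.
  by rewrite /wrap /= -cats1 count_cat /=; lia.
have mid : nth false (wrap a b w) P.+1 = nth false w P.
  by rewrite nth_wrap hs; do 2 (case: eqP => ?; first lia).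
have pr : forall d, 0 < d <= P ->
    nth false (wrap a b w) (P.+1 - d) || nth false (wrap a b w) (P.+1 + d) =
    nth false w (P - d) || nth false w (P + d).
  move=> d hd; rewrite !nth_wrap hs.
  do 4 (case: eqP => ?; first lia).
  rewrite (_ : (P.+1 - d).-1 = P - d); last lia.
  by rewrite (_ : (P.+1 + d).-1 = P + d); last lia.
have ends : nth false (wrap a b w) (P.+1 - P.+1) || nth false (wrap a b w) (P.+1 + P.+1) = a || b.
  rewrite !nth_wrap hs subnn /=; case: eqP => ? //; lia.
rewrite sz cnt mid; split.
  move=> [_ hc hc2 hd]; split => //.
    by rewrite -ends; apply: hd; lia.
  by move=> d hd1; rewrite -pr //; apply: hd; lia.
move=> [hab hc hc2 hd]; split => //.
move=> d /andP [d1 d2].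
case: (ltnP d P.+1) => hdP.
  by rewrite pr; [apply: hd|]; lia.
have -> : d = P.+1 by lia.
by rewrite ends.
Qed.

Lemma Gw_mem P q w : w \in Gw P q <-> validw P q w.
Proof.
elim: P q w => [|P IH] q w.
  split.
    case: q => [|q] //=.
    rewrite inE => /eqP ->; split => //; move=> d; lia.
  case=> hs hc hx _.
  case: w hs hc hx => [|x [|y w]] //= _ hc hx.
  case: x hx hc => //= _ hc.
  by case: q hc => //= _; rewrite inE.
split.
  rewrite /= mem_cat => /orP [/mapP [w' hw' ->]|].
    have [hs hc hm hd] := (IH _ _).1 hw'.
    by apply/(valid_wrap _ _ _ hs); split => //=; lia.
  case: q => [|q] //; rewrite mem_cat => /orP [] /mapP [w' hw' ->].
    have [hs hc hm hd] := (IH _ _).1 hw'.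
    by apply/(valid_wrap _ _ _ hs); split => //=; lia.
  have [hs hc hm hd] := (IH _ _).1 hw'.
  by apply/(valid_wrap _ _ _ hs); split => //=; lia.
move=> V; have [hs _ _ _] := V.
case: w hs V => [|a w1] //= hs.
case/lastP: w1 hs => [|w b] /= hs; first by move=> _; lia.
rewrite size_rcons in hs.
have hs' : size w = (2 * P).+1 by move: hs; rewrite -[size w]/(@size bool w); lia.
move/(valid_wrap q a b hs') => [hab hc hm hd].
rewrite /= mem_cat; case: a b hab hc => [] [] //= _ hc.
- apply/orP; left; apply: map_f; apply/IH; split => //; lia.
- case: q hc => [|q] hc; first lia.
  rewrite mem_cat; apply/orP; right; apply/orP; left; apply: map_f; apply/IH; split => //; lia.
- case: q hc => [|q] hc; first lia.
  rewrite mem_cat; apply/orP; right; apply/orP; right; apply: map_f; apply/IH; split => //; lia.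
Qed.

Fixpoint w2l (w : seq bool) : seq nat :=
  match w with
  | [::] => [::]
  | true :: w' => count negb w' :: w2l w'
  | false :: w' => w2l w'
  end.

Definition word2la w := [seq x <- w2l w | 0 < x].

Lemma w2l_bound w : all (fun x => x <= count negb w) (w2l w).
Proof.
elim: w => [|[] w IH] //=.
  rewrite leqnn /=; exact: IH.
apply: sub_all IH => x /=; lia.
Qed.

Lemma w2l_sorted w : sorted geq (w2l w).
Proof.
elim: w => [|[] w IH] //=.
case: w IH => [|[] w] //= IH.
  by rewrite IH andbT.
rewrite /= in IH.
case: (w2l w) IH (w2l_bound w) => [|y s] //= IH /andP [hy _].
by rewrite IH andbT /=; lia.
Qed.

Lemma w2l_size w : size (w2l w) = count id w.
Proof. by elim: w => [|[] w IH] //=; rewrite IH. Qed.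

Lemma w2l_X w (c v : Z) :
  (exists i, i < size (w2l w) /\ (Z.of_nat (nth 0%N (w2l w) i) + c - Z.of_nat i = v)%Z) <->
  (exists p, [/\ p < size w, nth false w p & (Z.of_nat (count negb w) + c - Z.of_nat p = v)%Z]).
Proof.
elim: w c => [|b w IH] c.
  by split => [[i [hi _]]|[p [hp _]]].
have sz : size (b :: w) = (size w).+1 by [].
rewrite sz {sz}.
case: b.
- have e1 : w2l (true :: w) = count negb w :: w2l w by [].
  have e2 : count negb (true :: w) = count negb w by [].
  rewrite e1 e2; split.
    move=> [[|i] [hi hv]].
      by exists 0; split => //; rewrite /= in hv; lia.
    have hv' : (Z.of_nat (nth 0%N (w2l w) i) + (c - 1) - Z.of_nat i = v)%Z.
      by rewrite /= in hv; lia.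
    have hi' : i < size (w2l w) by rewrite /= in hi.
    have [p [h1 h2 h3]] := (IH (c - 1)%Z).1 (ex_intro _ i (conj hi' hv')).
    by exists p.+1; split => //; lia.
  move=> [[|p] [hp hn hv]].
    by exists 0; split => //; lia.
  have hv' : (Z.of_nat (count negb w) + (c - 1) - Z.of_nat p = v)%Z by lia.
  have hp' : p < size w by [].
  have [i [h1 h2]] := (IH (c - 1)%Z).2 (ex_intro _ p (And3 hp' hn hv')).
  by exists i.+1; split => //; rewrite [nth _ _ _]/=; lia.
- have e1 : w2l (false :: w) = w2l w by [].
  have e2 : count negb (false :: w) = (count negb w).+1 by [].
  rewrite e1 e2; split.
    move=> /(IH c) [p [h1 h2 h3]]; exists p.+1; split => //; lia.
  move=> [[|p] [hp hn hv]] //.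
  apply/(IH c); exists p; split => //; lia.
Qed.

Fixpoint bw (prev : nat) (rows : seq nat) : seq bool :=
  match rows with
  | [::] => nseq prev false
  | r :: rs => nseq (prev - r) false ++ true :: bw r rs
  end.

Lemma w2l_nseq m w : w2l (nseq m false ++ w) = w2l w.
Proof. by elim: m. Qed.

Lemma count_nseqF m : count negb (nseq m false) = m.
Proof. by elim: m => //= m ->. Qed.

Lemma bw_count prev rows : path geq prev rows -> count negb (bw prev rows) = prev.
Proof.
elim: rows prev => [|r rs IH] prev /=; first by move=> _; exact: count_nseqF.
move=> /andP [h1 h2]; rewrite count_cat count_nseqF /= IH //; lia.
Qed.

Lemma bw_size prev rows : path geq prev rows -> size (bw prev rows) = prev + size rows.
Proof.
elim: rows prev => [|r rs IH] prev /=; first by rewrite size_nseq addn0.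
move=> /andP [h1 h2]; rewrite size_cat size_nseq /= IH //; lia.
Qed.

Lemma bw_w2l prev rows : path geq prev rows -> w2l (bw prev rows) = rows.
Proof.
elim: rows prev => [|r rs IH] prev /=.
  by move=> _; rewrite -[nseq prev false]cats0 w2l_nseq.
move=> /andP [h1 h2]; rewrite w2l_nseq /= bw_count // IH //.
Qed.

Lemma count_id_negb (w : seq bool) : count id w + count negb w = size w.
Proof. by elim: w => [|[] w IH] //=; rewrite -IH; lia. Qed.

Section WX.
Variables n k : nat.
Notation P := (n + k).

Lemma wX w v : size w = (2 * P).+1 -> count negb w = k ->
  inX n (word2la w) v <->
  (exists p, [/\ p < (2 * P).+1, nth false w p & v = (Z.of_nat P - Z.of_nat p)%Z]) \/
  (v <= - Z.of_nat P - 1)%Z.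
Proof.
move=> hs hc.
have hsz : size (w2l w) = (2 * n + k).+1.
  by rewrite w2l_size; have := count_id_negb w; lia.
rewrite /inX /word2la; split.
  move=> [i]; rewrite nth_filter_pos ?w2l_sorted // => hv.
  case: (ltnP i (size (w2l w))) => hi.
    have [p [h1 h2 h3]] := (w2l_X w (Z.of_nat n) v).1 (ex_intro _ i (conj hi hv)).
    by left; exists p; split => //; lia.
  by right; move: hv; rewrite nth_default //; lia.
move=> [[p [hp hn ->]]|hv].
  have hp' : p < size w by rewrite hs.
  have hv' : (Z.of_nat (count negb w) + Z.of_nat n - Z.of_nat p = Z.of_nat P - Z.of_nat p)%Z by lia.
  have [i [hi hv]] := (w2l_X w (Z.of_nat n) (Z.of_nat P - Z.of_nat p)).2
     (ex_intro _ p (And3 hp' hn hv')).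
  by exists i; rewrite nth_filter_pos ?w2l_sorted.
exists (Z.to_nat (Z.of_nat n - v)); rewrite nth_filter_pos ?w2l_sorted // nth_default //; lia.
Qed.

Lemma bitX w p : size w = (2 * P).+1 -> count negb w = k -> p < (2 * P).+1 ->
  nth false w p <-> inX n (word2la w) (Z.of_nat P - Z.of_nat p).
Proof.
move=> hs hc hp; rewrite wX //; split.
  by move=> h; left; exists p.
move=> [[p' [h1 h2 h3]]|h]; last lia.
by have -> : p = p' by lia.
Qed.

End WX.

Lemma crit_len n k la : is_partition la -> part1 la <= k -> Crit n la ->
  size la <= 2 * n + k + 1.
Proof.
move=> Hp Hk [_ hd].
case: (ltnP (size la) n.+2) => hl; first lia.
case: (hd (size la - n - 1)); first lia.
  move/(inX_up Hp); rewrite /part1 -nth0 in Hk; lia.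
move=> h; have G := @gap n la Hp.
rewrite (_ : (Z.of_nat n - Z.of_nat (size la) + 1 = - Z.of_nat (size la - n - 1))%Z) in G; [by case: (G h) | lia].
Qed.

Lemma i2n_iff n la : is_partition la -> (i2n n la <> None <-> Crit n la).
Proof. by move=> Hp; apply: i2n_crit. Qed.

Lemma path_pad k la m : is_partition la -> part1 la <= k ->
  path geq k (la ++ nseq m 0).
Proof.
move=> /andP [Hs _] Hk; rewrite cat_path; apply/andP; split.
  by case: la Hs Hk => [|x s] //= -> ->.
by elim: m (last k la) => [|m IH] y //=; rewrite IH andbT.
Qed.

Lemma filter_pad la m : is_partition la -> [seq x <- la ++ nseq m 0 | 0 < x] = la.
Proof.
move=> /andP [_ Ha]; rewrite filter_cat (all_filterP Ha).
by elim: m => [|m IH] //=; rewrite cats0.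
Qed.

Theorem mainTheorem2 (n k : nat) :
  exists s : seq (seq nat),
    [/\ uniq s,
        (forall la : seq nat,
            la \in s <-> [/\ is_partition la, part1 la <= k & i2n n la <> None])
      & size s = 2 ^ k * 'C(n + k, k)].
Proof.
exists (map word2la (Gw (n + k) k)); split.
- rewrite map_inj_in_uniq ?Gw_uniq //.
  move=> w1 w2 h1 h2 e.
  have [hs1 hc1 _ _] := (Gw_mem _ _ _).1 h1.
  have [hs2 hc2 _ _] := (Gw_mem _ _ _).1 h2.
  apply: (@eq_from_nth _ false); first by rewrite hs1 hs2.
  move=> p; rewrite hs1 => hp.
  apply/idP/idP => h.
    by apply/(bitX hs2 hc2 hp); rewrite -e; apply/(bitX hs1 hc1 hp).
  by apply/(bitX hs1 hc1 hp); rewrite e; apply/(bitX hs2 hc2 hp).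
- move=> la; split.
    move=> /mapP [w hw ->].
    have [hs hc hm hd] := (Gw_mem _ _ _).1 hw.
    have Hp : is_partition (word2la w).
      apply/andP; split; first exact: sorted_filter geq_trans _ _ (w2l_sorted w).
      exact: filter_all.
    split => //.
      rewrite /part1 /word2la; have := w2l_bound w; rewrite hc.
      case E: [seq x <- w2l w | 0 < x] => [|x s] //= /allP; apply.
      have hx : x \in [seq y <- w2l w | 0 < y] by rewrite E mem_head.
      by move: hx; rewrite mem_filter => /andP [].
    apply/(i2n_iff n Hp); split.
      apply/(wX _ hs hc); left; exists (n + k); split => //; lia.
    move=> d hd0; case: (ltnP (n + k) d) => hdP.
      right; apply/(wX _ hs hc); right; lia.
    have := hd d; rewrite hd0 hdP => /(_ isT) /orP [] h.
      left; apply/(wX _ hs hc); left; exists (n + k - d); split => //; lia.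
    right; apply/(wX _ hs hc); left; exists (n + k + d); split => //; lia.
  move=> [Hp Hk Hi].
  have Hc := (i2n_iff n Hp).1 Hi.
  have Hl := crit_len Hp Hk Hc.
  set rows := la ++ nseq (2 * n + k + 1 - size la) 0.
  have Hpath : path geq k rows by exact: path_pad.
  have Hrows : size rows = 2 * n + k + 1 by rewrite size_cat size_nseq; lia.
  have Hw : word2la (bw k rows) = la by rewrite /word2la bw_w2l // filter_pad.
  have hs : size (bw k rows) = (2 * (n + k)).+1 by rewrite bw_size // Hrows; lia.
  have hc : count negb (bw k rows) = k by rewrite bw_count.
  apply/mapP; exists (bw k rows) => //.
  apply/Gw_mem; split => //.
    apply/(bitX hs hc); first lia.
    by rewrite Hw (_ : (Z.of_nat (n + k) - Z.of_nat (n + k) = 0)%Z) //; [case: Hc | lia].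
  move=> d /andP [d1 d2].
  case: Hc => _ /(_ d d1) [] h.
    apply/orP; left; apply/(bitX hs hc); first lia.
    by rewrite Hw (_ : (Z.of_nat (n + k) - Z.of_nat (n + k - d) = Z.of_nat d)%Z) //; lia.
  apply/orP; right; apply/(bitX hs hc); first lia.
  by rewrite Hw (_ : (Z.of_nat (n + k) - Z.of_nat (n + k + d) = - Z.of_nat d)%Z) //; lia.
- by rewrite size_map Gw_size.
Qed.
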